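(* Let $G=(V,E)$ be a finite simple undirected graph of maximum degree at most $\Delta$, let $M$ be computed by a run of \textsc{MinGreedy} on $G$, and let $M^*$ be a maximum matching such that each component of $(V,M\cup M^* )$ with an edge is a singleton or an $M$-$M^*$-path. Let $\{u,v\}\in M$. If $\{u,v\}$ is a singleton, then $u$ and $v$ together are the source of at most $2(\Delta-1)$ transfers. If $\{u,v\}$ is an edge of an $M$-$M^*$-path, then $u$ and $v$ together are the source of at most $2(\Delta-2)$ transfers.
   Context: \textsc{MinGreedy}: starting with $M=\emptyset$, repeatedly select an arbitrary node $u$ of minimum non-zero current degree and an arbitrary neighbor $v$ of $u$, add $\{u,v\}$ to $M$ and remove all edges incident with $u$ or $v$ from the current graph. A singleton is an edge of $M\cap M^*$ forming a component of $(V,M\cup M^* )$. An $M$-$M^*$-path is a component of $(V,M\cup M^* )$ that is an alternating path starting and ending with an $M^*$-edge, with $m\geq1$ edges of $M$ and $m+1$ edges of $M^*$; its endpoints are its two $M$-uncovered end nodes. Let $F=E\setminus(M\cup M^* )$. For an endpoint $w$ of an $M$-$M^*$-path, an edge $\{v,w\}\in F$ is a transfer from $v$ to $w$ if, in the step of the algorithm in which $v$ is matched, the current degree of $w$ drops to at most $1$ (i.e. after that step $w$ has current degree at most $1$). *)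

(* Defs.v *)
(* Graph: finite type V with a symmetric irreflexive adjacency
   relation adj. Undirected edges are represented as two-element sets {x,y}. *)
From mathcomp Require Import all_boot.
Set Implicit Arguments. Unset Strict Implicit. Unset Printing Implicit Defensive.

Section Defs.
Variable V : finType.
Variable adj : rel V.

Definition simple_graph := symmetric adj /\ irreflexive adj.
Definition max_deg_le (D : nat) := forall x : V, #|[set y | adj x y]| <= D.

(* A run is the sequence of pairs (u_i, v_i) matched in steps 0,1,2,... *)
Definition matched_before (r : seq (V * V)) (i : nat) (x : V) : bool :=
  x \in flatten [seq [:: p.1; p.2] | p <- take i r].

(* current degree of w before step i (i.e. after the first i steps):
   edges incident with a matched node have been removed *)
Definition curdeg (r : seq (V * V)) (i : nat) (w : V) : nat :=
  if matched_before r i w then 0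
  else #|[set x | adj w x & ~~ matched_before r i x]|.

Definition mingreedy_run (r : seq (V * V)) : Prop :=
  (forall i u v, onth r i = Some (u, v) ->
     [/\ 0 < curdeg r i u,
         (forall w, 0 < curdeg r i w -> curdeg r i u <= curdeg r i w),
         adj u v & ~~ matched_before r i v])
  /\ (forall w, curdeg r (size r) w = 0).

Definition run_matching (r : seq (V * V)) : {set {set V}} :=
  [set [set p.1; p.2] | p in r].

Definition is_matching (N : {set {set V}}) : Prop :=
  (forall e, e \in N -> exists x y, adj x y /\ e = [set x; y]) /\
  (forall e1 e2, e1 \in N -> e2 \in N -> e1 != e2 -> [disjoint e1 & e2]).

Definition is_maximum_matching (N : {set {set V}}) : Prop :=
  is_matching N /\ forall N', is_matching N' -> #|N'| <= #|N|.

Definition covers (N : {set {set V}}) (x : V) : bool :=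
  [exists e in N, x \in e].

Section Union.
Variables M Ms : {set {set V}}.

Definition urel : rel V := fun x y => (x != y) && ([set x; y] \in M :|: Ms).

Definition ucomp (x : V) : {set V} := [set y | connect urel x y].

Definition singleton (x y : V) : Prop :=
  [set x; y] \in M :&: Ms /\ ucomp x = [set x; y].

(* the sequence p = [x_0; ...; x_{2m+1}] spans a component of (V, M \cup M* )
   which is an alternating path starting and ending with an M*-edge,
   with m >= 1 edges of M and m+1 edges of M*, whose end nodes are M-uncovered *)
Definition MMpath (p : seq V) : Prop :=
  [/\ uniq p, ~~ odd (size p) /\ 4 <= size p,
      (forall i x y, onth p i = Some x -> onth p i.+1 = Some y ->
         [set x; y] \in (if odd i then M else Ms)),
      (forall x, onth p 0 = Some x -> ~~ covers M x /\ ucomp x = [set z in p]) &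
      (forall x, onth p (size p).-1 = Some x -> ~~ covers M x)].

Definition MMendpoint (w : V) : Prop :=
  exists p, MMpath p /\ (onth p 0 = Some w \/ onth p (size p).-1 = Some w).

Definition MMpath_edge (u v : V) : Prop :=
  exists p i x y, [/\ MMpath p, onth p i = Some x, onth p i.+1 = Some y &
                     [set x; y] = [set u; v]].

Definition components_ok : Prop :=
  forall x, (exists y, urel x y) ->
    (exists y, singleton x y) \/ (exists p, MMpath p /\ x \in p).
End Union.

(* {s,w} in F = E \ (M \cup M* ) is a transfer from s to w: w is an endpoint
   of an M-M*-path and after the step of the run in which s is matched,
   the current degree of w is at most 1 *)
Definition transfer (r : seq (V * V)) (Ms : {set {set V}}) (s w : V) : Prop :=
  let M := run_matching r in
  [/\ adj s w, [set s; w] \notin M :|: Ms, MMendpoint M Ms w &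
      exists i a b, [/\ onth r i = Some (a, b), (s == a) || (s == b) &
                        curdeg r i.+1 w <= 1]].

End Defs.

(* Main.v *)
Require Import Defs.
From mathcomp Require Import all_boot.

Section Aux.
Variable V : finType.
Variable adj : rel V.

Lemma set2_adj x y x' y' : symmetric adj -> irreflexive adj ->
  adj x' y' -> [set x; y] = [set x'; y'] -> adj x y.
Proof.
move=> sym irr axy E.
have hx : x \in [set x'; y'] by rewrite -E set21.
have hy : y \in [set x'; y'] by rewrite -E set22.
have hx' : x' \in [set x; y] by rewrite E set21.
have hy' : y' \in [set x; y] by rewrite E set22.
move: hx hy hx' hy'; rewrite !inE.
case/orP=> /eqP ->; case/orP=> /eqP ->.
- by move=> _; rewrite orbb => /eqP E'; rewrite E' irr in axy.
- by [].
- by rewrite sym.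
- by rewrite orbb => /eqP E'; rewrite E' irr in axy.
Qed.

Lemma onth_some (s : seq V) n x0 : n < size s -> onth s n = Some (nth x0 s n).
Proof. by move=> ns; rewrite onthE (nth_map x0). Qed.

Lemma edge_adj (r : seq (V * V)) Ms x y :
  simple_graph adj -> mingreedy_run adj r -> is_matching adj Ms ->
  [set x; y] \in run_matching r :|: Ms -> adj x y.
Proof.
case=> sym irr [run _] [mat _]; rewrite inE; case/orP.
- case/imsetP=> p pin E.
  case/onthP: pin => i hi.
  move: (run i p.1 p.2); rewrite -surjective_pairing => /(_ hi) [_ _ ap _].
  by apply: (set2_adj _ _ _ _ sym irr ap); rewrite E.
- move=> /mat [x' [y' [a E]]]; exact: (set2_adj _ _ _ _ sym irr a E).
Qed.

Lemma transfer_bound (r : seq (V * V)) Ms D s (S T : {set V}) :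
  max_deg_le adj D ->
  (forall a, a \in S -> adj s a /\ [set s; a] \in run_matching r :|: Ms) ->
  (forall w, w \in T -> transfer adj r Ms s w) ->
  #|T| <= D - #|S|.
Proof.
move=> md hS hT.
set N := [set y | adj s y].
have sub : T \subset N :\: S.
  apply/subsetP=> w /hT [aw nin _ _]; rewrite !inE aw andbT.
  by apply/negP=> /hS [_ h]; rewrite h in nin.
have SN : S \subset N by apply/subsetP=> a /hS [h _]; rewrite inE.
apply: leq_trans (subset_leq_card sub) _.
rewrite cardsD (setIidPr SN).
exact: leq_sub2r (md s).
Qed.

End Aux.

Theorem lemma4 (V : finType) (adj : rel V) (D : nat)
  (r : seq (V * V)) (Ms : {set {set V}}) :
  simple_graph adj -> max_deg_le adj D ->
  mingreedy_run adj r ->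
  is_maximum_matching adj Ms ->
  components_ok (run_matching r) Ms ->
  forall u v : V, [set u; v] \in run_matching r ->
  forall Tu Tv : {set V},
    (* Tu, Tv: sets of nodes receiving a transfer from u, resp. from v *)
    (forall w, w \in Tu -> transfer adj r Ms u w) ->
    (forall w, w \in Tv -> transfer adj r Ms v w) ->
    (singleton (run_matching r) Ms u v -> #|Tu| + #|Tv| <= 2 * (D - 1)) /\
    (MMpath_edge (run_matching r) Ms u v -> #|Tu| + #|Tv| <= 2 * (D - 2)).
Proof.
move=> sg md run [mat _] _ u v uvM Tu Tv hTu hTv.
have EA x y : [set x; y] \in run_matching r :|: Ms -> adj x y.
  exact: (edge_adj _ _ _ _ _ _ sg run mat).
have uvMM : [set u; v] \in run_matching r :|: Ms by rewrite inE uvM.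
have vuMM : [set v; u] \in run_matching r :|: Ms by rewrite setUC.
have interior : forall p s, MMpath (run_matching r) Ms p -> s \in p ->
    covers (run_matching r) s ->
    forall T : {set V}, (forall w, w \in T -> transfer adj r Ms s w) ->
    #|T| <= D - 2.
  move=> p s [up _ ed h0 hl] sp cov T hT.
  case/onthP: sp => j hj.
  have js : j < size p by rewrite -onthTE hj.
  case: j hj js => [|j] hj js.
    by case: (h0 _ hj); rewrite cov.
  have j2 : j.+2 < size p.
    rewrite ltn_neqAle js andbT; apply/negP=> /eqP E.
    have h1 : onth p (size p).-1 = Some s by rewrite -E.
    by move: (hl s h1); rewrite cov.
  have ha := onth_some _ p j s (ltnW js).
  have hb := onth_some _ p j.+2 s j2.
  have e1 := ed _ _ _ ha hj.
  have e2 := ed _ _ _ hj hb.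
  have e1' : [set s; nth s p j] \in run_matching r :|: Ms.
    by rewrite setUC; move: e1; case: ifP; rewrite inE => _ ->; rewrite ?orbT.
  have e2' : [set s; nth s p j.+2] \in run_matching r :|: Ms.
    by move: e2; case: ifP; rewrite inE => _ ->; rewrite ?orbT.
  have neq : nth s p j != nth s p j.+2.
    by rewrite (nth_uniq s (ltn_trans (ltnSn j) js) j2 up) ltn_eqF.
  have := transfer_bound _ _ r Ms D s [set nth s p j; nth s p j.+2] T md _ hT.
  rewrite cards2 neq; apply=> a /set2P [] ->.
    by split=> //; apply: EA.
  by split=> //; apply: EA.
split.
- move=> _.
  have bu : #|Tu| <= D - 1.
    rewrite -(cards1 v); apply: (transfer_bound _ _ r Ms D u [set v] Tu md _ hTu).
    by move=> a /set1P ->; split=> //; apply: EA.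
  have bv : #|Tv| <= D - 1.
    rewrite -(cards1 u); apply: (transfer_bound _ _ r Ms D v [set u] Tv md _ hTv).
    by move=> a /set1P ->; split=> //; apply: EA.
  by rewrite mul2n -addnn; apply: leq_add.
- case=> p [i [x [y [pp hx hy E]]]].
  have xp : x \in p by apply/onthP; exists i.
  have yp : y \in p by apply/onthP; exists i.+1.
  have inp z : z \in [set u; v] -> z \in p.
    by rewrite -E !inE => /orP [] /eqP ->.
  have covu : covers (run_matching r) u by apply/existsP; exists [set u; v]; rewrite uvM set21.
  have covv : covers (run_matching r) v by apply/existsP; exists [set u; v]; rewrite uvM set22.
  rewrite mul2n -addnn; apply: leq_add.
  + exact: interior pp (inp _ (set21 _ _)) covu _ hTu.
  + exact: interior pp (inp _ (set22 _ _)) covv _ hTv.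
Qed.
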